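(* Let $\mathcal A$ be a finite, union-closed, separating family of sets whose universe $U(\mathcal A)=\bigcup_{A\in\mathcal A}A$ has $m\geq 1$ elements, and suppose $|\mathcal A|\leq 2m$. Then there is an element $x\in U(\mathcal A)$ contained in at least $\tfrac12|\mathcal A|$ member-sets of $\mathcal A$.
   Context: $\mathcal A$ is union-closed if $A\cup B\in\mathcal A$ for all $A,B\in\mathcal A$. $\mathcal A$ is separating if for any two distinct elements $x,y\in U(\mathcal A)$ there is $A\in\mathcal A$ containing exactly one of $x,y$. *)

(* Defs.v *)
From mathcomp Require Import all_boot.
Set Implicit Arguments. Unset Strict Implicit. Unset Printing Implicit Defensive.

(* A finite family of finite sets is modelled as F : {set {set T}} over a
   finite ground type T; only the universe U(F) matters. *)
Definition universe (T : finType) (F : {set {set T}}) : {set T} :=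
  \bigcup_(A in F) A.

Definition union_closed (T : finType) (F : {set {set T}}) : Prop :=
  forall A B, A \in F -> B \in F -> A :|: B \in F.

Definition separating (T : finType) (F : {set {set T}}) : Prop :=
  forall x y, x \in universe F -> y \in universe F -> x != y ->
    exists2 A, A \in F & (x \in A) != (y \in A).

Definition freq (T : finType) (F : {set {set T}}) (x : T) : nat :=
  #|[set A in F | x \in A]|.

(* Main.v *)
Require Import Defs.
From mathcomp Require Import all_boot.

Section Aux.
Variables (T : finType) (F : {set {set T}}).
Hypothesis uc : union_closed F.

Lemma bigcup_in (P : pred {set T}) A0 : A0 \in F -> P A0 ->
  \bigcup_(A in F | P A) A \in F.
Proof.
move=> A0F PA0.
have -> : \bigcup_(A in F | P A) A = A0 :|: \bigcup_(A in F | P A) A.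
  apply/esym/setUidPr; exact: (bigcup_sup A0 (P:=fun A => (A \in F) && P A)) (introT andP (conj A0F PA0)).
apply: (big_ind (fun X => A0 :|: X \in F)).
- by rewrite setU0.
- move=> X Y HX HY.
  by rewrite -[A0 in A0 :|: _]setUid -setUACA; apply: uc.
- by move=> A /andP[AF _]; apply: uc.
Qed.

Definition M (y : T) := \bigcup_(A in F | y \notin A) A.

Lemma notin_M y : y \notin M y.
Proof. by apply/bigcupP => -[A /andP[_ yA]]; rewrite (negbTE yA). Qed.

Lemma sub_M {y A} : A \in F -> y \notin A -> A \subset M y.
Proof. by move=> AF yA; apply: (bigcup_sup A (P:=fun A => (A \in F) && (y \notin A))); rewrite AF. Qed.

Lemma M_in y A : A \in F -> y \notin A -> M y \in F.
Proof. by move=> AF yA; exact: (@bigcup_in (fun A => y \notin A) A AF yA). Qed.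

Hypothesis sep : separating F.

Lemma M_inj y z : y \in universe F -> z \in universe F -> M y = M z -> y = z.
Proof.
move=> yU zU eM; apply/eqP; apply/negPn/negP => neq.
have [A AF] := sep y z yU zU neq.
case yA: (y \in A); case zA: (z \in A) => //= _.
- have := subsetP (sub_M AF (negbT zA) : A \subset M z) y yA; rewrite -eM.
  by rewrite (negbTE (notin_M y)).
- have := subsetP (sub_M AF (negbT yA) : A \subset M y) z zA; rewrite eM.
  by rewrite (negbTE (notin_M z)).
Qed.
End Aux.

Theorem mainTheorem2 (T : finType) (F : {set {set T}}) (m : nat) :
  union_closed F -> separating F ->
  #|universe F| = m -> 1 <= m -> #|F| <= 2 * m ->
  exists2 x, x \in universe F & #|F| <= 2 * freq F x.
Proof.
move=> uc sep cU m1 Fle.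
have [x0 x0U] : exists x0, x0 \in universe F.
  by apply/set0Pn; rewrite -card_gt0 cU.
have UF : universe F \in F.
  have [A0 AF _] : exists2 A0, A0 \in F & x0 \in A0.
    by case/bigcupP: x0U => A AF xA; exists A.
  have := @bigcup_in T F uc (fun _ => true) A0 AF isT.
  by congr (_ \in F); apply: eq_bigl => A; rewrite andbT.
case: (boolP [exists y in universe F, forall A in F, y \in A]).
  case/exists_inP => y yU /forall_inP allA; exists y => //.
  rewrite /freq; have -> : [set A in F | y \in A] = F.
    by apply/setP => A; rewrite inE; case AF: (A \in F) => //; rewrite allA.
  by rewrite leq_pmull.
rewrite negb_exists_in => /forall_inP hall.
have avoid y : y \in universe F -> exists2 A, A \in F & y \notin A.
  move=> yU; have := hall y yU; rewrite negb_forall_in => /exists_inP[A AF yA].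
  by exists A.
case: (arg_minnP (fun y => #|@M _ F y|) x0U) => x xU xmin.
exists x => //.
pose f y := if y == x then universe F else @M _ F y.
have MinF y : y \in universe F -> @M _ F y \in F.
  by move=> yU; have [A AF yA] := avoid y yU; apply: M_in AF yA.
have finj : {in universe F &, injective f}.
  move=> y z yU zU; rewrite /f.
  have MneU w : w \in universe F -> @M _ F w != universe F.
    move=> wU; apply/eqP => e; have := @notin_M _ F w; by rewrite e wU.
  case: eqP => [->|yx]; case: eqP => [->|zx] // e.
  - by move: (MneU z zU); rewrite -e eqxx.
  - by move: (MneU y yU); rewrite e eqxx.
  - exact: (@M_inj _ F sep y z yU zU e).
have sub : f @: universe F \subset [set A in F | x \in A].
  apply/subsetP => B /imsetP[y yU ->]; rewrite inE /f.
  case: eqP => [_|yx]; first by rewrite UF (xU : x \in universe F).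
  rewrite MinF //=; apply/negPn/negP => xM.
  have sMM : @M _ F y \subset @M _ F x := @sub_M _ F x _ (MinF y yU) xM.
  have e : @M _ F y = @M _ F x.
    apply/eqP; rewrite eqEcard sMM /=; exact: xmin.
  by apply: yx; exact: (@M_inj _ F sep y x yU xU e).
have := subset_leq_card sub; rewrite card_in_imset // cU => mle.
by apply: (leq_trans Fle); rewrite leq_mul2l.
Qed.
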